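(* Let $\varepsilon>0$, let $\mathcal S=\{S_1,\dots,S_K,S_\infty\}$ be a family of pairwise disjoint subsets of $\{2,\dots,n\}$ and $\rho\in\{1,\dots,\lceil1/\varepsilon\rceil\}^K$. Every extreme point $x^*$ of $P(\mathcal S,\rho)$ has at most two fractional components; moreover, if it has exactly two fractional components, then both lie in the same set $S_h$ for some $h\in[K]$ (not in $S_\infty$).
   Context: Minimum Knapsack data: $n$ items with costs $c\in\mathbb{R}^n_{\ge0}$, weights $w\in\mathbb{R}^n_{\ge0}$ and target $b$. For $\mathcal S$ and $\rho$ as in the claim, $P(\mathcal S,\rho)$ is the set of $x\in\mathbb{R}^n$ satisfying: $x_1=1$; $w^Tx\ge b$; $\sum_{i\in S_k}x_i=\rho_k$ for all $k\in[K]$ with $\rho_k<\lceil1/\varepsilon\rceil$; $\sum_{i\in S_k}x_i\ge\rho_k$ for all $k\in[K]$ with $\rho_k=\lceil1/\varepsilon\rceil$; $x_i=0$ for all $i\in\{2,\dots,n\}\setminus\bigcup_{k\in[K]\cup\{\infty\}}S_k$; and $0\le x_i\le1$ for all $i\in\bigcup_{k\in[K]\cup\{\infty\}}S_k$. *)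

(* Defs.v *)
From HB Require Import structures.
From mathcomp Require Import all_boot all_order all_algebra.
Set Implicit Arguments. Unset Strict Implicit. Unset Printing Implicit Defensive.
Import Order.TTheory GRing.Theory Num.Theory.
Local Open Scope ring_scope.

(* Items are indexed by 'I_n.+1; item "1" of the paper is ord0,
   item j (j = 2..n+1) is the ordinal j-1. *)

Definition Lceil (R : archiRealFieldType) (eps : R) : int := Num.ceil (eps^-1).

Definition inP (R : archiRealFieldType) (n K : nat) (eps : R)
    (w : 'I_n.+1 -> R) (b : R)
    (S : 'I_K -> {set 'I_n.+1}) (Sinf : {set 'I_n.+1}) (rho : 'I_K -> int)
    (x : 'I_n.+1 -> R) : Prop :=
  [/\ x ord0 = 1 /\ \sum_(i < n.+1) w i * x i >= b,
      (forall k, rho k < Lceil eps -> \sum_(i in S k) x i = (rho k)%:~R),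
      (forall k, rho k = Lceil eps -> \sum_(i in S k) x i >= (rho k)%:~R),
      (forall i, i != ord0 -> (forall k, i \notin S k) -> i \notin Sinf -> x i = 0)
    & (forall i, ((exists k, i \in S k) \/ i \in Sinf) -> 0 <= x i <= 1)].

Definition extreme_point (R : archiRealFieldType) (n : nat)
    (P : ('I_n.+1 -> R) -> Prop) (x : 'I_n.+1 -> R) : Prop :=
  P x /\
  forall (y z : 'I_n.+1 -> R) (t : R), P y -> P z -> 0 < t -> t < 1 ->
    (forall i, x i = t * y i + (1 - t) * z i) -> (forall i, y i = z i).

Definition frac_set (R : archiRealFieldType) (n : nat) (x : 'I_n.+1 -> R)
  : {set 'I_n.+1} := [set i | x i \isn't a Num.int].

(* Main.v *)
Require Import Defs.
From HB Require Import structures.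
From mathcomp Require Import all_boot all_order all_algebra.
From mathcomp Require Import ring lra.
Import Order.TTheory GRing.Theory Num.Theory.
Local Open Scope ring_scope.

Lemma fin_lb (R : realDomainType) (I : finType) (P : pred I) (f : I -> R) :
  (forall i, P i -> 0 < f i) -> exists2 e, 0 < e & forall i, P i -> e <= f i.
Proof.
move=> Hf.
suff: forall s : seq I, exists2 e, 0 < e & forall i, i \in s -> P i -> e <= f i.
  by case/(_ (enum I)) => e e0 He; exists e => // i Pi; apply: He; rewrite ?mem_enum.
elim=> [|a s [e e0 He]]; first by exists 1.
case: (boolP (P a)) => Pa.
- exists (Num.min e (f a)); first by rewrite lt_min e0 Hf.
  move=> i; rewrite inE => /orP[/eqP -> _|iS Pi]; first by rewrite ge_min lexx orbT.
  by rewrite ge_min He.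
- exists e => // i; rewrite inE => /orP[/eqP -> Pi|]; first by rewrite Pi in Pa.
  exact: He.
Qed.

Lemma sum_delta (R : nzRingType) (I : finType) (A : {pred I}) (i : I) :
  \sum_(m in A) ((m == i)%:R : R) = (i \in A)%:R.
Proof.
case: (boolP (i \in A)) => iA.
  rewrite (bigD1 i) //= eqxx big1 ?addr0 // => m /andP[_ /negbTE ->]; by rewrite mulr0n.
rewrite big1 ?mulr0n // => m mA; case: eqP => [mi|]; last by rewrite mulr0n.
by subst; rewrite mA in iA.
Qed.

Lemma sum_sub_abs (R : numDomainType) (I : finType) (A : {pred I}) (d : I -> R) :
  \sum_(m in A) `|d m| <= \sum_m `|d m|.
Proof.
rewrite [X in _ <= X](bigID (mem A)) /= lerDl sumr_ge0 //.
Qed.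

Lemma abs_le_sum (R : numDomainType) (I : finType) (i : I) (d : I -> R) :
  `|d i| <= \sum_m `|d m|.
Proof.
rewrite (bigD1 i) //= lerDl sumr_ge0 //.
Qed.

Lemma open01 (R : archiRealFieldType) (a : R) :
  0 <= a <= 1 -> a \isn't a Num.int -> 0 < a < 1.
Proof.
case/andP => a0 a1 ai.
have h0 : a != 0 by apply/eqP => e; move: ai; rewrite e rpred0.
have h1 : a != 1 by apply/eqP => e; move: ai; rewrite e rpred1.
by rewrite !lt_neqAle a0 a1 eq_sym h0 h1.
Qed.
Arguments abs_le_sum {R I} i d.
Arguments sum_sub_abs {R I} A d.
Arguments sum_delta {R I} A i.
Theorem lemma2 (R : archiRealFieldType) (n K : nat)
    (c w : 'I_n.+1 -> R) (b eps : R)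
    (S : 'I_K -> {set 'I_n.+1}) (Sinf : {set 'I_n.+1}) (rho : 'I_K -> int)
    (x : 'I_n.+1 -> R) :
  0 < eps ->
  (forall i, 0 <= c i) -> (forall i, 0 <= w i) ->
  (forall k, ord0 \notin S k) -> ord0 \notin Sinf ->
  (forall k l, k != l -> [disjoint S k & S l]) ->
  (forall k, [disjoint S k & Sinf]) ->
  (forall k, 1 <= rho k <= Lceil eps) ->
  extreme_point (inP eps w b S Sinf rho) x ->
  (#|frac_set x| <= 2)%N /\
  (#|frac_set x| = 2%N -> exists h : 'I_K, frac_set x \subset S h).
Proof.
move=> eps0 c0 w0 S0 Sinf0 disj disjinf rho1 [xP ext].
have xP' := xP.
case: xP' => [[x0 wb] Seq Sge out box].
set F := frac_set x.
have inF : forall i, (i \in F) = (x i \isn't a Num.int) by move=> i; rewrite inE.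
have Fprop : forall i, i \in F -> 0 < x i < 1.
  move=> i; rewrite inF => xi.
  case: (boolP (i == ord0)) => [/eqP i0|i0].
    by move: xi; rewrite i0 x0 rpred1.
  case: (boolP [exists k, i \in S k]) => [/existsP [k ik]|nk].
  - exact: open01 (box i (or_introl (ex_intro _ k ik))) xi.
  case: (boolP (i \in Sinf)) => iS.
  - exact: open01 (box i (or_intror iS)) xi.
  have nk' : forall k, i \notin S k.
    by move=> k; apply: contra nk => ik; apply/existsP; exists k.
  have := out i i0 nk' iS.
  by move=> e; move: xi; rewrite e rpred0.

have int_rho : forall k, ((rho k)%:~R : R) \is a Num.int by move=> k; exact: intr_int.
have F0 : ord0 \notin F by rewrite inF x0 rpred1.
pose valid (d : 'I_n.+1 -> R) := (forall i, i \notin F -> d i = 0) /\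
  (forall k, (\sum_(i in S k) x i \isn't a Num.int) \/ \sum_(i in S k) d i = 0).
have key : forall d, valid d -> \sum_(i < n.+1) w i * d i = 0 -> forall i, d i = 0.
  move=> d [dF dS] wd.
  have [e1 e10 He1] := @fin_lb R _ (fun i => 0 < x i < 1) (fun i => Num.min (x i) (1 - x i))
    (fun i (h : 0 < x i < 1) => ltac:(case/andP: h => h1 h2; rewrite lt_min h1 subr_gt0 h2 //)).
  have [e2 e20 He2] := @fin_lb R _ (fun k => ((rho k)%:~R : R) < \sum_(i in S k) x i)
    (fun k => \sum_(i in S k) x i - (rho k)%:~R)
    (fun k (h : ((rho k)%:~R : R) < \sum_(i in S k) x i) => ltac:(rewrite subr_gt0 //)).
  set e := Num.min e1 e2.
  have e0 : 0 < e by rewrite lt_min e10 e20.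
  have ee1 : e <= e1 by rewrite ge_min lexx.
  have ee2 : e <= e2 by rewrite ge_min lexx orbT.
  set D := \sum_i `|d i|.
  have D0 : 0 <= D by rewrite sumr_ge0.
  have inPs : forall s, `|s| * (D + 1) <= e -> inP eps w b S Sinf rho (fun i => x i + s * d i).
    move=> s hs.
    have sD : forall i, `|s * d i| <= e.
      move=> i; rewrite normrM.
      have := abs_le_sum i d; rewrite -/D => hd.
      have := normr_ge0 s; have := normr_ge0 (d i); nra.
    have sumsplit : forall (A : {pred 'I_n.+1}) (g : 'I_n.+1 -> R),
        \sum_(i in A) g i * (x i + s * d i) = \sum_(i in A) g i * x i + s * \sum_(i in A) g i * d i.
      by move=> A g; rewrite mulr_sumr -big_split /=; apply: eq_bigr => i _; ring.
    have sumsplit1 : forall (A : {pred 'I_n.+1}),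
        \sum_(i in A) (x i + s * d i) = \sum_(i in A) x i + s * \sum_(i in A) d i.
      by move=> A; rewrite mulr_sumr -big_split.
    split.
    - split; first by rewrite (dF _ F0) mulr0 addr0 x0.
      by rewrite sumsplit wd mulr0 addr0.
    - move=> k hk; have := Seq k hk; case: (dS k) => [nint|sd0] hx.
        by move: nint; rewrite hx int_rho.
      by rewrite sumsplit1 sd0 mulr0 addr0.
    - move=> k hk; have := Sge k hk; case: (dS k) => [nint|sd0] hx; last first.
        by rewrite sumsplit1 sd0 mulr0 addr0.
      have lt : ((rho k)%:~R : R) < \sum_(i in S k) x i.
        rewrite lt_neqAle hx andbT; apply: contra nint => /eqP <-; exact: int_rho.
      have := He2 k lt => /= h2.
      have hsd : `|s * \sum_(i in S k) d i| <= e.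
        rewrite normrM.
        have := ler_norm_sum (index_enum 'I_n.+1) d (mem (S k)).
        have := sum_sub_abs (mem (S k)) d; rewrite -/D => h3 h4.
        have := normr_ge0 s; have := normr_ge0 (\sum_(i in S k) d i); nra.
      rewrite sumsplit1.
      have := ler_norm (- (s * \sum_(i in S k) d i)); rewrite normrN.
      lra.
    - move=> i i0 nk ni; have xi := out i i0 nk ni.
      have : i \notin F by rewrite inF xi rpred0.
      by move/dF => ->; rewrite xi mulr0 addr0.
    - move=> i hi; case: (boolP (i \in F)) => iF; last first.
        by rewrite (dF _ iF) mulr0 addr0; exact: box.
      have h01 := Fprop i iF.
      have := He1 i h01 => /=; rewrite le_min => /andP[h1 h2].
      have := sD i; have := ler_norm (s * d i); have := ler_norm (- (s * d i)); rewrite normrN.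
      case/andP: h01 => _ _ ha hb hc.
      apply/andP; split; lra.
  have Dp : 0 < D + 1 by rewrite ltr_wpDl.
  set del := e / (D + 1).
  have del0 : 0 < del by rewrite divr_gt0.
  have h1 : `|del| * (D + 1) <= e.
    by rewrite ger0_norm ?(ltW del0) // /del divfK // gt_eqF.
  have h2 : `|- del| * (D + 1) <= e by rewrite normrN.
  move=> i.
  have t0 : 0 < (2 : R)^-1 by rewrite invr_gt0 ltr0n.
  have t1 : (2 : R)^-1 < 1 by rewrite invf_lt1 ?ltr0n ?ltr1n.
  have := ext _ _ _ (inPs del h1) (inPs (- del) h2) t0 t1.
  have comb : forall j, x j = 2^-1 * (x j + del * d j) + (1 - 2^-1) * (x j + - del * d j).
    by move=> j; field.
  move=> /(_ comb i) hi.
  have : del * d i = 0 by lra.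
  by move/eqP; rewrite mulf_eq0 gt_eqF //= => /eqP.
have combL : forall u v p q, valid u -> valid v -> v q != 0 -> u p != 0 -> v p = 0 -> False.
  move=> u v p q [uF uS] [vF vS] vq up vp.
  set a := \sum_(i < n.+1) w i * v i.
  set bb := \sum_(i < n.+1) w i * u i.
  case: (boolP (a == 0)) => [/eqP a0|a0].
    by move: vq; rewrite (key v (conj vF vS) a0 q) eqxx.
  pose d := fun i => a * u i - bb * v i.
  have vd : valid d.
    split.
      by move=> i iF; rewrite /d (uF _ iF) (vF _ iF) !mulr0 subrr.
    move=> k; case: (boolP (\sum_(i in S k) x i \is a Num.int)) => hk; last by left.
    right; rewrite /d /= sumrB -!mulr_sumr.
    case: (uS k) => [|->]; first by rewrite hk.
    case: (vS k) => [|->]; first by rewrite hk.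
    by rewrite !mulr0 subrr.
  have wd : \sum_(i < n.+1) w i * d i = 0.
    rewrite /d.
    have -> : \sum_(i < n.+1) w i * (a * u i - bb * v i) = a * bb - bb * a.
      rewrite (eq_bigr (fun i => a * (w i * u i) - bb * (w i * v i))); last by move=> i _; ring.
      by rewrite sumrB -!mulr_sumr.
    by rewrite mulrC subrr.
  have := key d vd wd p; rewrite /d vp mulr0 subr0 => /eqP.
  by rewrite mulf_eq0 (negbTE a0) (negbTE up).
have pair : forall i k, i \in F -> i \in S k -> \sum_(l in S k) x l \is a Num.int ->
    exists j, [/\ j \in F, j != i & j \in S k].
  move=> i k iF ik hint.
  case: (boolP [exists j, [&& j \in F, j != i & j \in S k]]) => [/existsP [j /and3P [? ? ?]]|nj].
    by exists j.
  exfalso; move: iF; rewrite inF; apply/negP; rewrite negbK.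
  move: hint; rewrite (bigD1 i) //= => hint.
  have hr : \sum_(l in S k | l != i) x l \is a Num.int.
    apply: rpred_sum => l /andP [lk li].
    have : l \notin F by apply: contra nj => lF; apply/existsP; exists l; rewrite lF li lk.
    by rewrite inF negbK.
  have -> : x i = (x i + \sum_(l in S k | l != i) x l) - \sum_(l in S k | l != i) x l.
    by rewrite addrK.
  exact: rpredB.
pose ev (i : 'I_n.+1) := fun l : 'I_n.+1 => ((l == i)%:R : R).
have elem : forall i, i \in F -> exists u, [/\ valid u, u i = 1,
    (forall l, l != i -> u l != 0 -> exists k, i \in S k /\ l \in S k) &
    (forall l l', l != i -> l' != i -> u l != 0 -> u l' != 0 -> l = l')].
  move=> i iF.
  case: (boolP [exists k, (i \in S k) && (\sum_(l in S k) x l \is a Num.int)]).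
  - case/existsP => k /andP [ik hint].
    have [j [jF ji jk]] := pair i k iF ik hint.
    exists (fun l => ev i l - ev j l); split.
    + split.
        move=> l lF; rewrite /ev.
        have -> : (l == i) = false by apply/negbTE; apply: contraNneq lF => ->.
        have -> : (l == j) = false by apply/negbTE; apply: contraNneq lF => ->.
        by rewrite subrr.
      move=> k'; right; rewrite sumrB /ev !sum_delta.
      case: (eqVneq k k') => [<-|kk]; first by rewrite ik jk subrr.
      by rewrite (disjointFr (disj _ _ kk) ik) (disjointFr (disj _ _ kk) jk) subrr.
    + by rewrite /ev eqxx eq_sym (negbTE ji) subr0.
    + move=> l li; rewrite /ev (negbTE li) sub0r oppr_eq0 pnatr_eq0 eqb0 negbK => /eqP ->.
      by exists k.
    + move=> l l' li l'i; rewrite /ev (negbTE li) (negbTE l'i) !sub0r !oppr_eq0 !pnatr_eq0 !eqb0 !negbK.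
      by move=> /eqP -> /eqP ->.
  - move=> nk; exists (ev i); split.
    + split.
        move=> l lF; rewrite /ev.
        by have -> : (l == i) = false by apply/negbTE; apply: contraNneq lF => ->.
      move=> k; case: (boolP (i \in S k)) => ik.
        left; apply: contra nk => hk; apply/existsP; exists k; by rewrite ik.
      by right; rewrite /ev sum_delta (negbTE ik).
    + by rewrite /ev eqxx.
    + by move=> l li; rewrite /ev (negbTE li) eqxx.
    + by move=> l l' li; rewrite /ev (negbTE li) eqxx.
have no3 : ~~ (2 < #|F|)%N.
  apply/negP => /card_gt2P [a [b' [c' [[aF bF cF] [ab bc ca]]]]].
  have [v [vv va vsup vuniq]] := elem a aF.
  have [p [pF pa vp]] : exists p, [/\ p \in F, p != a & v p = 0].
    case: (eqVneq (v b') 0) => vb; first by exists b'; rewrite eq_sym.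
    case: (eqVneq (v c') 0) => vc; first by exists c'.
    by move: bc; rewrite (vuniq b' c') ?eqxx // eq_sym.
  have [u [uv up _ _]] := elem p pF.
  apply: (combL u v p a uv vv); by rewrite ?va ?up ?oner_eq0.
split; first by rewrite leqNgt.
move=> /eqP /cards2P [a [b' [ab Fab]]].
have aF : a \in F by rewrite Fab !inE eqxx.
have bF : b' \in F by rewrite Fab !inE eqxx orbT.
have [v [vv va vsup _]] := elem a aF.
case: (eqVneq (v b') 0) => vb.
  have [u [uv ub _ _]] := elem b' bF.
  by exfalso; apply: (combL u v b' a uv vv); rewrite ?va ?ub ?oner_eq0.
have ba : b' != a by rewrite eq_sym.
have [k [ak bk]] := vsup b' ba vb.
exists k; apply/subsetP => l; rewrite Fab !inE => /orP [] /eqP ->; done.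
Qed.
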